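(* For the three calculi on $\mathbb F_2[e,x]$ given by the algebras (A) $x\circ x=0$, (B) $x\circ x=x$, (C) $x\circ x=e+x$ (basis $e,x$, $e$ the unit), the quantum metrics are exactly: (A) $g_{A.I}=\mathrm de\otimes\mathrm dx+\mathrm dx\otimes\mathrm de$ and $g_{A.II}=\mathrm de\otimes\mathrm dx+\mathrm dx\otimes\mathrm de+\mathrm dx\otimes\mathrm dx$; (B) $g_B=\mathrm de\otimes\mathrm de+\mathrm de\otimes\mathrm dx+\mathrm dx\otimes\mathrm de$; (C) $g_{C.I}=\mathrm de\otimes\mathrm dx+\mathrm dx\otimes\mathrm de+\mathrm dx\otimes\mathrm dx$, $g_{C.II}=\mathrm de\otimes\mathrm de+\mathrm de\otimes\mathrm dx+\mathrm dx\otimes\mathrm de$, $g_{C.III}=\mathrm de\otimes\mathrm de+\mathrm dx\otimes\mathrm dx$. Moreover, the quantum Levi-Civita connections with constant coefficients, besides the zero connection $\nabla\mathrm de=\nabla\mathrm dx=0$ (with $\sigma$ the flip on generators), are exactly: for $g_{A.I}$: (1) $\nabla\mathrm de=\mathrm dx\otimes\mathrm dx,\ \nabla\mathrm dx=0$; (2) $\nabla\mathrm de=\mathrm dx\otimes\mathrm de+\mathrm de\otimes\mathrm dx,\ \nabla\mathrm dx=\mathrm dx\otimes\mathrm dx$; (3) $\nabla\mathrm de=\mathrm dx\otimes\mathrm de+\mathrm de\otimes\mathrm dx+\mathrm dx\otimes\mathrm dx,\ \nabla\mathrm dx=\mathrm dx\otimes\mathrm dx$; (4) $\nabla\mathrm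 de=0,\ \nabla\mathrm dx=\mathrm de\otimes\mathrm de$; (5) $\nabla\mathrm de=\mathrm de\otimes\mathrm dx+\mathrm dx\otimes\mathrm de,\ \nabla\mathrm dx=\mathrm de\otimes\mathrm de+\mathrm dx\otimes\mathrm dx$; for $g_{A.II}$: the connections (1), (2), (3) above; for $g_B$: $\nabla\mathrm de=0,\ \nabla\mathrm dx=\mathrm de\otimes\mathrm de$; for $g_{C.I}$: $\nabla\mathrm de=\mathrm de\otimes\mathrm dx+\mathrm dx\otimes\mathrm de+\mathrm dx\otimes\mathrm dx,\ \nabla\mathrm dx=\mathrm dx\otimes\mathrm dx$; for $g_{C.II}$: $\nabla\mathrm de=0,\ \nabla\mathrm dx=\mathrm de\otimes\mathrm de$; for $g_{C.III}$: $\nabla\mathrm de=\mathrm de\otimes\mathrm de+\mathrm dx\otimes\mathrm dx,\ \nabla\mathrm dx=\mathrm de\otimes\mathrm dx+\mathrm dx\otimes\mathrm de$. In all cases the map $\alpha$ in the decomposition $\nabla\omega=\theta\otimes\omega-\sigma(\omega\otimes\theta)+\alpha\omega$, $\theta=\mathrm de$, is zero.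
   Context: Standing setup. Work over $\mathbb F_2$. Let $(V,\circ)$ be a commutative associative algebra over $\mathbb F_2$ with basis $x^1,\dots,x^n$ and structure constants $x^\mu\circ x^\nu=\sum_\rho V^{\mu\nu}{}_\rho x^\rho$. Let $A=\mathbb F_2[x^1,\dots,x^n]$ be the polynomial algebra on the same symbols. The associated differential calculus is the $A$-bimodule $\Omega^1$ which is free as a left $A$-module on $\mathrm dx^1,\dots,\mathrm dx^n$, with right action determined by $\mathrm dx^\mu\, x^\nu=x^\nu\,\mathrm dx^\mu+\sum_\rho V^{\mu\nu}{}_\rho\,\mathrm dx^\rho$, together with the unique map $\mathrm d:A\to\Omega^1$ satisfying the Leibniz rule $\mathrm d(ab)=(\mathrm da)b+a\,\mathrm db$, $\mathrm d(x^\mu)=\mathrm dx^\mu$, $\mathrm d1=0$. The bimodule $\Omega^1\otimes_A\Omega^1$ is free as a left module on $\mathrm dx^\mu\otimes\mathrm dx^\nu$. $\Omega^2$ is the quotient of $\Omega^1\otimes_A\Omega^1$ by the sub-bimodule generated by $\mathrm dx^\mu\otimes\mathrm dx^\mu$ and $\mathrm dx^\mu\otimes\mathrm dx^\nu+\mathrm dx^\nu\otimes \mathrm dx^\mu$; the quotient map is denoted $\wedge$, and $\mathrm d$ is extended to $\Omega^1$ by $\mathrm d(a\,\mathrm dx^\mu)=\mathrm da\wedge\mathrm dx^\mu$. A quantum metric is $g=\sum_{\mu,\nu}g_{\mu\nu}\mathrm dx^\mu\otimes\mathrm dx^\nu$ with constants $g_{\mu\nu}\in\mathbb F_2$, $g_{\mu\nu}=g_{\nu\mu}$,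 the matrix $(g_{\mu\nu})$ invertible, and $g$ central: $x^\rho g=g x^\rho$ for all $\rho$. A bimodule connection is a pair $(\nabla,\sigma)$ with $\nabla:\Omega^1\to\Omega^1\otimes_A\Omega^1$ additive, $\nabla(a\omega)=a\nabla\omega+\mathrm da\otimes\omega$, and $\sigma:\Omega^1\otimes_A\Omega^1\to\Omega^1\otimes_A\Omega^1$ a bimodule map with $\nabla(\omega a)=(\nabla\omega)a+\sigma(\omega\otimes\mathrm da)$. It has constant coefficients if $\nabla\mathrm dx^\mu=\sum\Gamma^\mu{}_{\nu\rho}\mathrm dx^\nu\otimes\mathrm dx^\rho$ with $\Gamma^\mu{}_{\nu\rho}\in\mathbb F_2$. A quantum Levi-Civita connection (QLC) for $g$ is a bimodule connection with $\sigma$ invertible, torsion free ($\wedge\nabla=\mathrm d$ on $\Omega^1$) and metric compatible ($(\nabla\otimes\mathrm{id})g+(\sigma\otimes\mathrm{id})(\mathrm{id}\otimes\nabla)g=0$). Its curvature is $R_\nabla=(\mathrm d\otimes\mathrm{id}-(\wedge\otimes\mathrm{id})(\mathrm{id}\otimes\nabla))\nabla:\Omega^1\to\Omega^2\otimes_A\Omega^1$. Here the basis is $x^1=e$, $x^2=x$. *)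

(* Defs.v *)
From HB Require Import structures.
From mathcomp Require Import all_boot all_order all_algebra.
Set Implicit Arguments. Unset Strict Implicit. Unset Printing Implicit Defensive.
Import GRing.Theory.
Local Open Scope ring_scope.

(* The polynomial algebra A = F_2[e,x], realised as F_2[e][x]:
   the inner variable is e, the outer variable is x. *)
Notation A := {poly {poly 'F_2}}.

Definition cA (c : 'F_2) : A := c%:P%:P.
Definition evar : A := ('X : {poly 'F_2})%:P.
Definition xvar : A := 'X.

Definition i0 : 'I_2 := ord0.
Definition i1 : 'I_2 := ord_max.
Definition gen (mu : 'I_2) : A := if val mu == 0%N then evar else xvar.

(* structure constants  x^mu o x^nu = sum_rho V mu nu rho x^rho *)
Definition struct := 'I_2 -> 'I_2 -> 'I_2 -> 'F_2.

(* unital algebra with unit e and x o x = c0 e + c1 x *)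
Definition unital_alg (c0 c1 : 'F_2) : struct := fun mu nu rho =>
  if val mu == 0%N then (nu == rho)%:R
  else if val nu == 0%N then (mu == rho)%:R
  else if val rho == 0%N then c0 else c1.

Definition VA : struct := unital_alg 0 0.
Definition VB : struct := unital_alg 0 1.
Definition VC : struct := unital_alg 1 1.

(* Omega^1 : free left A-module on dx^0 = de, dx^1 = dx; elements are row
   vectors of left coefficients.  Omega^1 (x)_A Omega^1 : free left module
   on dx^mu (x) dx^nu; elements are 2x2 matrices T with T mu nu the left
   coefficient of dx^mu (x) dx^nu. *)
Definition dx (mu : 'I_2) : 'rV[A]_2 := delta_mx 0 mu.

(* matrix of right multiplication by the generator x^nu on Omega^1:
   dx^mu x^nu = x^nu dx^mu + sum_rho V mu nu rho dx^rho *)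
Definition Nmx (V : struct) (nu : 'I_2) : 'M[A]_2 :=
  \matrix_(mu, rho) cA (V mu nu rho).
Definition Rgen (V : struct) (nu : 'I_2) : 'M[A]_2 := (gen nu)%:M + Nmx V nu.

(* matrix of right multiplication by a general a = sum a_ij e^j x^i *)
Definition Ract (V : struct) (a : A) : 'M[A]_2 :=
  \sum_(i < size a) \sum_(j < size a`_i)
     ((cA (a`_i)`_j)%:M *m (Rgen V i0 ^+ j) *m (Rgen V i1 ^+ i)).

Definition rmul (V : struct) (w : 'rV[A]_2) (a : A) : 'rV[A]_2 := w *m Ract V a.

Definition tens (V : struct) (w eta : 'rV[A]_2) : 'M[A]_2 :=
  \matrix_(k, l) (rmul V w (eta 0 l)) 0 k.

(* right action of A on Omega^1 (x)_A Omega^1 : (w (x) eta) a = w (x) (eta a) *)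
Definition rtens (V : struct) (T : 'M[A]_2) (a : A) : 'M[A]_2 :=
  \sum_(mu < 2) \sum_(nu < 2) (T mu nu *: tens V (dx mu) (rmul V (dx nu) a)).

(* exterior derivative d : A -> Omega^1, the unique additive map with
   d(x^mu) = dx^mu satisfying Leibniz, written out on monomials e^j x^i:
   d(e^j x^i) = sum_{k<j} e^k (de . e^(j-1-k) x^i) + sum_{k<i} e^j x^k (dx . x^(i-1-k)) *)
Definition dA (V : struct) (a : A) : 'rV[A]_2 :=
  \sum_(i < size a) \sum_(j < size a`_i)
     (cA (a`_i)`_j *:
       (\sum_(k < j) (evar ^+ k *: rmul V (dx i0) (evar ^+ (j - k.+1) * xvar ^+ i))
      + \sum_(k < i) ((evar ^+ j * xvar ^+ k) *: rmul V (dx i1) (xvar ^+ (i - k.+1))))).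

(* Omega^2 : quotient of Omega^1 (x)_A Omega^1 by the sub-bimodule generated by
   dx^mu (x) dx^mu and dx^mu (x) dx^nu + dx^nu (x) dx^mu, which (char 2) is the
   set of symmetric tensors; the quotient is free of rank one on de /\ dx, and
   we identify Omega^2 with A via the coefficient of de /\ dx. *)
Definition wedge (T : 'M[A]_2) : A := T i0 i1 + T i1 i0.

Definition dd (V : struct) (w : 'rV[A]_2) : A :=
  \sum_(mu < 2) wedge (tens V (dA V (w 0 mu)) (dx mu)).

Definition liftmx (g : 'M['F_2]_2) : 'M[A]_2 := map_mx cA g.

Definition is_qmetric (V : struct) (g : 'M['F_2]_2) : Prop :=
  [/\ g^T = g, g \in unitmx &
      forall rho : 'I_2, gen rho *: liftmx g = rtens V (liftmx g) (gen rho)].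

Definition is_bimod_map (V : struct) (sigma : 'M[A]_2 -> 'M[A]_2) : Prop :=
  [/\ forall T U, sigma (T + U) = sigma T + sigma U,
      forall (a : A) T, sigma (a *: T) = a *: sigma T &
      forall T (a : A), sigma (rtens V T a) = rtens V (sigma T) a].

Definition bimod_conn (V : struct) (nabla : 'rV[A]_2 -> 'M[A]_2)
    (sigma : 'M[A]_2 -> 'M[A]_2) : Prop :=
  [/\ forall w eta, nabla (w + eta) = nabla w + nabla eta,
      forall (a : A) w, nabla (a *: w) = a *: nabla w + tens V (dA V a) w,
      forall w (a : A), nabla (rmul V w a) = rtens V (nabla w) a + sigma (tens V w (dA V a)) &
      is_bimod_map V sigma].


Definition torsion_free (V : struct) (nabla : 'rV[A]_2 -> 'M[A]_2) : Prop :=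
  forall w, wedge (nabla w) = dd V w.

(* Omega^1 (x)_A Omega^1 (x)_A Omega^1 : functions b |-> slice, where the slice
   b is the 2-tensor multiplying (_ (x) dx^b). *)
(* T (x) dx^nu *)
Definition tens3r (T : 'M[A]_2) (nu : 'I_2) : 'I_2 -> 'M[A]_2 :=
  fun b => if b == nu then T else 0.
(* w (x) T *)
Definition tens3l (V : struct) (w : 'rV[A]_2) (T : 'M[A]_2) : 'I_2 -> 'M[A]_2 :=
  fun b => \matrix_(p, a) (rmul V w (T a b)) 0 p.

(* (nabla (x) id) g + (sigma (x) id)(id (x) nabla) g = 0 *)
Definition metric_compatible (V : struct) (g : 'M['F_2]_2)
    (nabla : 'rV[A]_2 -> 'M[A]_2) (sigma : 'M[A]_2 -> 'M[A]_2) : Prop :=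
  forall b : 'I_2,
    \sum_(mu < 2) \sum_(nu < 2)
       (cA (g mu nu) *: (tens3r (nabla (dx mu)) nu b
                         + sigma (tens3l V (dx mu) (nabla (dx nu)) b))) = 0.

Definition is_QLC (V : struct) (g : 'M['F_2]_2)
    (nabla : 'rV[A]_2 -> 'M[A]_2) (sigma : 'M[A]_2 -> 'M[A]_2) : Prop :=
  [/\ bimod_conn V nabla sigma, bijective sigma, torsion_free V nabla &
      metric_compatible V g nabla sigma].

(* constant Christoffel symbols: Gam = (matrix of nabla de, matrix of nabla dx),
   entry (nu, rho) = coefficient of dx^nu (x) dx^rho *)
Definition Gam (G : 'M['F_2]_2 * 'M['F_2]_2) (mu : 'I_2) : 'M['F_2]_2 :=
  if val mu == 0%N then G.1 else G.2.

Definition const_coeff (nabla : 'rV[A]_2 -> 'M[A]_2)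
    (G : 'M['F_2]_2 * 'M['F_2]_2) : Prop :=
  forall mu, nabla (dx mu) = liftmx (Gam G mu).

(* 2x2 matrix over F_2 from coefficients of de(x)de, de(x)dx, dx(x)de, dx(x)dx *)
Definition mx2 (a b c d : 'F_2) : 'M['F_2]_2 :=
  \matrix_(i, j) if val i == 0%N then (if val j == 0%N then a else b)
                 else (if val j == 0%N then c else d).

Definition theta : 'rV[A]_2 := dx i0.

Definition qlc_classification (V : struct) (g : 'M['F_2]_2)
    (L : seq ('M['F_2]_2 * 'M['F_2]_2)) : Prop :=
  [/\ forall G, (exists nabla sigma, is_QLC V g nabla sigma /\ const_coeff nabla G)
                <-> G \in L,
      forall G nabla sigma, is_QLC V g nabla sigma -> const_coeff nabla G ->
        forall w, nabla w - (tens V theta w - sigma (tens V w theta)) = 0 &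
      forall nabla sigma, is_QLC V g nabla sigma -> const_coeff nabla (0, 0) ->
        forall mu nu, sigma (tens V (dx mu) (dx nu)) = tens V (dx nu) (dx mu)].

(* Submission.v *)
Require Import Defs.
From HB Require Import structures.
From mathcomp Require Import all_boot all_order all_algebra.
From mathcomp Require Import ring.
Import GRing.Theory.
Local Open Scope ring_scope.

Ltac big2 := rewrite ?big_ord_recl ?big_ord0 /=.

Lemma I2P (i : 'I_2) : i = i0 \/ i = i1.
Proof. case: i => [[|[|n]] Hn]; [left|right|by []]; exact: val_inj. Qed.

Lemma F2P (z : 'F_2) : z = 0 \/ z = 1.
Proof. case: z => [[|[|n]] Hn]; [left|right|by []]; exact: val_inj. Qed.

Lemma A2 (a : A) : a + a = 0.
Proof.
rewrite -mulr2n -mulr_natr.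
have -> : (2%:R : A) = cA 2%:R by rewrite /cA !polyC_natr.
have -> : (2%:R : 'F_2) = 0 by apply/eqP.
by rewrite /cA !polyC0 mulr0.
Qed.

Lemma oppA (a : A) : - a = a.
Proof. by apply/eqP; rewrite eq_sym -addr_eq0 A2. Qed.

Lemma oppM m n (M : 'M[A]_(m, n)) : - M = M.
Proof. by apply/matrixP => i j; rewrite mxE oppA. Qed.

Lemma M2 m n (M : 'M[A]_(m, n)) : M + M = 0.
Proof. by apply/matrixP => i j; rewrite !mxE A2. Qed.

Lemma F2_2 (a : 'F_2) : a + a = 0.
Proof. by case: (F2P a) => ->; apply/eqP. Qed.

Lemma cA_nat (b : bool) : cA (b%:R) = b%:R.
Proof. by case: b; rewrite /cA ?polyC1 ?polyC0. Qed.

Section Gen.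
Variables c0 c1 : 'F_2.
Local Notation V := (unital_alg c0 c1).

Lemma Nmx0 : Nmx V i0 = 1%:M.
Proof.
apply/matrixP => mu rho; rewrite !mxE /unital_alg.
by case: (I2P mu) => ->; case: (I2P rho) => -> /=; rewrite ?cA_nat.
Qed.

Lemma Rgen0 : Rgen V i0 = (evar + 1)%:M.
Proof. by rewrite /Rgen Nmx0 raddfD. Qed.

Definition phi : {poly 'F_2} -> A := (@polyC _) \o (comp_poly ('X + 1)).

Lemma inner_sum (p : {poly 'F_2}) :
  \sum_(j < size p) ((cA p`_j)%:M *m (Rgen V i0 ^+ j)) = (phi p)%:M :> 'M[A]_2.
Proof.
rewrite Rgen0 /phi /= comp_polyE rmorph_sum /= raddf_sum /=.
apply: eq_bigr => j _.
rewrite -rmorphXn /= -scalar_mxM; congr (_%:M).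
by rewrite /cA -mul_polyC rmorphM /= rmorphXn /= rmorphD /= rmorph1.
Qed.

Lemma RactE (a : A) : Ract V a = horner_mx (Rgen V i1) (map_poly phi a).
Proof.
rewrite /Ract /horner_mx /horner_morph.
rewrite (@horner_coef_wide _ (size a)); last first.
  by rewrite /map_poly (leq_trans (size_poly _ _)) // /map_poly size_poly.
apply: eq_bigr => i _.
rewrite -mulmx_suml inner_sum.
by rewrite coef_map /= coef_map /=.
Qed.


Lemma Ract_add (a b : A) : Ract V (a + b) = Ract V a + Ract V b.
Proof. by rewrite !RactE !raddfD. Qed.

Lemma Ract_mul (a b : A) : Ract V (a * b) = Ract V a * Ract V b.
Proof. by rewrite !RactE !rmorphM. Qed.

Lemma Ract_sum I (r : seq I) (P : pred I) (F : I -> A) :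
  Ract V (\sum_(i <- r | P i) F i) = \sum_(i <- r | P i) Ract V (F i).
Proof. by rewrite RactE !raddf_sum; apply: eq_bigr => i _; rewrite RactE. Qed.

Lemma Ract_cA c : Ract V (cA c) = (cA c)%:M.
Proof. by rewrite RactE /cA map_polyC horner_mx_C /phi /= comp_polyC. Qed.

Lemma Ract_1 : Ract V 1 = 1.
Proof. by rewrite RactE rmorph1 rmorph1. Qed.

Lemma Ract_nat (b : bool) : Ract V (b%:R) = (b%:R)%:M.
Proof. by rewrite -cA_nat Ract_cA. Qed.

Lemma Ract_e : Ract V evar = (evar + 1)%:M.
Proof.
rewrite RactE /evar map_polyC horner_mx_C /phi /= comp_polyX.
by rewrite rmorphD /= rmorph1.
Qed.

Lemma Ract_x : Ract V xvar = Rgen V i1.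
Proof. by rewrite RactE /xvar map_polyX horner_mx_X. Qed.

Lemma Ract_gen rho : Ract V (gen rho) = Rgen V rho.
Proof. by case: (I2P rho) => -> /=; rewrite ?Ract_e ?Ract_x ?Rgen0. Qed.

Lemma rmul_dx mu a : rmul V (dx mu) a = row mu (Ract V a).
Proof. by rewrite /rmul rowE. Qed.

Lemma row_dec (w : 'rV[A]_2) : w = \sum_(mu < 2) w 0 mu *: dx mu.
Proof. exact: row_sum_delta. Qed.

Lemma tensE (w eta : 'rV[A]_2) k l :
  tens V w eta k l = \sum_(j < 2) w 0 j * Ract V (eta 0 l) j k.
Proof. by rewrite /tens /rmul !mxE. Qed.


Lemma tensDl w1 w2 eta : tens V (w1 + w2) eta = tens V w1 eta + tens V w2 eta.
Proof.
apply/matrixP => k l; rewrite [RHS]mxE !tensE; big2; rewrite !mxE; ring.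
Qed.

Lemma tensDr w eta1 eta2 : tens V w (eta1 + eta2) = tens V w eta1 + tens V w eta2.
Proof.
apply/matrixP => k l; rewrite [RHS]mxE !tensE [X in Ract _ X]mxE Ract_add; big2; rewrite !mxE; ring.
Qed.

Lemma tensZl (a : A) w eta : tens V (a *: w) eta = a *: tens V w eta.
Proof.
apply/matrixP => k l; rewrite [RHS]mxE !tensE; big2; rewrite !mxE; ring.
Qed.

Lemma tensZr (a : A) w eta : tens V w (a *: eta) = tens V (rmul V w a) eta.
Proof.
apply/matrixP => k l; rewrite !tensE !mxE Ract_mul /rmul -mulmxE.
big2; rewrite !mxE; big2; ring.
Qed.

End Gen.

Section G2. Variables c0 c1 : 'F_2.
Local Notation V := (unital_alg c0 c1).
Lemma lift00 : lift ord0 ord0 = ord_max :> 'I_2.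
Proof. exact: val_inj. Qed.

Lemma tens_dxr w nu : tens V w (dx nu) = \matrix_(k, l) ((l == nu)%:R * w 0 k).
Proof.
apply/matrixP => k l; rewrite /tens /rmul !mxE eqxx /=.
rewrite Ract_nat (bigD1 k) //= mxE eqxx mulr1n.
rewrite big1 ?addr0; last first.
  by move=> j /negbTE njk; rewrite mxE njk mulr0n mulr0.
by rewrite mulrC.
Qed.

Lemma tens_dx mu nu : tens V (dx mu) (dx nu) = delta_mx mu nu.
Proof.
rewrite tens_dxr; apply/matrixP => k l; rewrite !mxE eqxx /=.
by rewrite -natrM mulnb andbC.
Qed.

Lemma dx_sum mu (f : 'I_2 -> A) : \sum_(j < 2) dx mu 0 j * f j = f mu.
Proof.
rewrite (bigD1 mu) //= mxE !eqxx mul1r big1 ?addr0 // => j /negbTE njm.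
by rewrite mxE njm andbF mul0r.
Qed.

Lemma rtensE T a k l :
  rtens V T a k l = \sum_(mu < 2) \sum_(nu < 2) T mu nu * Ract V (Ract V a nu l) mu k.
Proof.
rewrite /rtens summxE; apply: eq_bigr => mu _; rewrite summxE; apply: eq_bigr => nu _.
by rewrite mxE tensE rmul_dx mxE dx_sum.
Qed.

Lemma rtensDl T U a : rtens V (T + U) a = rtens V T a + rtens V U a.
Proof. apply/matrixP => k l; rewrite [RHS]mxE !rtensE; big2; rewrite !mxE; ring. Qed.

Lemma rtensZ (c : A) T a : rtens V (c *: T) a = c *: rtens V T a.
Proof. apply/matrixP => k l; rewrite [RHS]mxE !rtensE; big2; rewrite !mxE; ring. Qed.

Lemma rtensDr T a b : rtens V T (a + b) = rtens V T a + rtens V T b.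
Proof.
apply/matrixP => k l; rewrite [RHS]mxE !rtensE Ract_add; big2.
rewrite !mxE !Ract_add !mxE; ring.
Qed.

Lemma rtens_tens w eta a : rtens V (tens V w eta) a = tens V w (rmul V eta a).
Proof.
apply/matrixP => k l; rewrite rtensE tensE /rmul [(eta *m _) 0 l]mxE Ract_sum.
under [in RHS]eq_bigr do rewrite summxE.
under [in RHS]eq_bigr do under eq_bigr do rewrite Ract_mul -mulmxE mxE.
big2; rewrite !tensE; big2; ring.
Qed.


Lemma Ract0 : Ract V 0 = 0.
Proof. by rewrite RactE !raddf0. Qed.

Lemma Ract_Rgen rho nu l :
  Ract V (Rgen V rho nu l) = Rgen V rho *+ (nu == l) + (cA (V nu rho l))%:M.
Proof.
rewrite /Rgen !mxE Ract_add Ract_cA.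
by case: (nu == l); rewrite ?mulr1n ?mulr0n ?Ract_gen ?Ract0.
Qed.

Lemma rtens_gen T rho : rtens V T (gen rho) = (Rgen V rho)^T *m T + T *m Nmx V rho.
Proof.
apply/matrixP => k l; rewrite rtensE Ract_gen.
under eq_bigr do under eq_bigr do rewrite Ract_Rgen.
rewrite !mxE; big2; rewrite !mxE !mulmxnE /Rgen !mxE /i0 /i1 !lift00.
by case: (I2P k) => ->; case: (I2P l) => -> /=; rewrite /i0 /i1 ?mulr1n ?mulr0n; ring.
Qed.
End G2.

Section G3. Variables c0 c1 : 'F_2.
Local Notation V := (unital_alg c0 c1).

Lemma Ract_exp a n : Ract V (a ^+ n) = Ract V a ^+ n.
Proof. by rewrite !RactE !rmorphXn. Qed.

Lemma polyexp (a : A) :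
  a = \sum_(i < size a) \sum_(j < size a`_i) cA (a`_i)`_j * (evar ^+ j * xvar ^+ i).
Proof.
have pexp (R : nzRingType) (p : {poly R}) : p = \sum_(j < size p) p`_j *: 'X^j.
  by rewrite -{1}[p]coefK poly_def.
rewrite {1}(pexp _ a); apply: eq_bigr => i _.
rewrite -mul_polyC {1}(pexp _ a`_i) rmorph_sum /= mulr_suml.
apply: eq_bigr => j _.
by rewrite -mul_polyC rmorphM /= rmorphXn /= /cA /evar /xvar mulrA.
Qed.

Lemma thetaN : theta *m Nmx V i1 = dx i1.
Proof.
apply/rowP => l; rewrite !mxE /theta.
under eq_bigr do rewrite !mxE.
rewrite (bigD1 i0) //= big1 ?addr0; last first.
  by move=> j /negbTE nj; rewrite nj mul0r.
rewrite mul1r /unital_alg /= cA_nat.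
by case: (I2P l) => -> /=.
Qed.

Lemma sumXX j : \sum_(k < j) evar ^+ k * (evar + 1) ^+ (j - k.+1) = (evar + 1) ^+ j - evar ^+ j.
Proof.
rewrite subrXX (addrC evar 1) addrK mul1r; apply: eq_bigr => k _.
by rewrite mulrC subnS predn_sub addrC.
Qed.

Lemma mono_eq (i j : nat) :
  \sum_(k < j) (evar ^+ k *: rmul V (dx i0) (evar ^+ (j - k.+1) * xvar ^+ i))
  + \sum_(k < i) ((evar ^+ j * xvar ^+ k) *: rmul V (dx i1) (xvar ^+ (i - k.+1)))
  = theta *m ((Rgen V i0 ^+ j) *m (Rgen V i1 ^+ i)) + (evar ^+ j * xvar ^+ i) *: theta.
Proof.
have E1 : \sum_(k < j) (evar ^+ k *: rmul V (dx i0) (evar ^+ (j - k.+1) * xvar ^+ i))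
   = ((evar + 1) ^+ j - evar ^+ j) *: (theta *m Rgen V i1 ^+ i).
  rewrite -sumXX scaler_suml; apply: eq_bigr => k _.
  rewrite /rmul Ract_mul !Ract_exp Ract_e Ract_x -scalerA; congr (_ *: _).
  by rewrite -rmorphXn /= -mulmxE mulmxA mul_mx_scalar -scalemxAl.
have E2 : \sum_(k < i) ((evar ^+ j * xvar ^+ k) *: rmul V (dx i1) (xvar ^+ (i - k.+1)))
   = evar ^+ j *: (theta *m (Rgen V i1 ^+ i - (xvar%:M) ^+ i)).
  have RN : Rgen V i1 - xvar%:M = Nmx V i1.
    by rewrite /Rgen /gen /= addrAC subrr add0r.
  rewrite (subrXX_comm _ (scalar_mxC _ _)) RN -mulmxE mulmxA thetaN.
  rewrite mulmx_sumr scaler_sumr; apply: eq_bigr => k _.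
  rewrite /rmul Ract_exp Ract_x -scalerA; congr (_ *: _).
  by rewrite -rmorphXn /= mul_mx_scalar -scalemxAr subnS predn_sub.
rewrite E1 E2 Rgen0 -[(evar + 1)%:M ^+ j]rmorphXn /= mulmxA mul_mx_scalar -scalemxAl.
rewrite -[xvar%:M ^+ i]rmorphXn /= mulmxBr mul_mx_scalar scalerBl scalerBr scalerA.
by rewrite addrA subrK oppM.
Qed.

Lemma dA_eq a : dA V a = rmul V theta a + a *: theta.
Proof.
have Ha : a *: theta = \sum_(i < size a) \sum_(j < size a`_i)
    cA (a`_i)`_j *: ((evar ^+ j * xvar ^+ i) *: theta).
  rewrite {1}(polyexp a) scaler_suml; apply: eq_bigr => i _.
  by rewrite scaler_suml; apply: eq_bigr => j _; rewrite scalerA.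
rewrite Ha /dA /rmul /Ract mulmx_sumr -big_split; apply: eq_bigr => i _.
rewrite mulmx_sumr -big_split; apply: eq_bigr => j _.
rewrite mono_eq scalerDr; congr (_ + _).
by rewrite -!mulmxA mul_scalar_mx scalemxAr.
Qed.

Lemma dA_cA c : dA V (cA c) = 0.
Proof.
by rewrite dA_eq /rmul Ract_cA mul_mx_scalar M2.
Qed.

Lemma dA_gen rho : dA V (gen rho) = dx rho.
Proof.
rewrite dA_eq /rmul Ract_gen.
case: (I2P rho) => -> /=.
  by rewrite Rgen0 mul_mx_scalar scalerDl scale1r /gen /= addrAC M2 add0r.
rewrite /Rgen /gen /= mulmxDr mul_mx_scalar thetaN.
by rewrite addrC addrA M2 add0r.
Qed.
End G3.

Definition cAm := (@polyC {poly 'F_2} \o @polyC 'F_2).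
Lemma liftE (M : 'M['F_2]_2) : liftmx M = map_mx cAm M.
Proof. by []. Qed.

Lemma liftmxD M N : liftmx (M + N) = liftmx M + liftmx N.
Proof. by rewrite !liftE map_mxD. Qed.
Lemma liftmxM M N : liftmx (M *m N) = liftmx M *m liftmx N.
Proof. by rewrite !liftE map_mxM. Qed.
Lemma liftmx_tr M : liftmx (M^T) = (liftmx M)^T.
Proof. by rewrite !liftE map_trmx. Qed.
Lemma liftmxZ c M : liftmx (c *: M) = cA c *: liftmx M.
Proof. by rewrite !liftE map_mxZ. Qed.
Lemma liftmx_delta i j : liftmx (delta_mx i j) = delta_mx i j.
Proof. by rewrite !liftE map_delta_mx. Qed.
Lemma liftmx0 : liftmx 0 = 0.
Proof. by rewrite !liftE map_mx0. Qed.
Lemma liftmx_sum I (r : seq I) (P : pred I) (F : I -> 'M['F_2]_2) :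
  liftmx (\sum_(i <- r | P i) F i) = \sum_(i <- r | P i) liftmx (F i).
Proof. by rewrite liftE raddf_sum. Qed.
Lemma liftmx_inj : injective liftmx.
Proof. move=> M N; rewrite !liftE; exact: map_mx_inj. Qed.
Lemma cA_inj : injective cA.
Proof. by move=> a b /polyC_inj /polyC_inj. Qed.
Lemma cA_add a b : cA (a + b) = cA a + cA b.
Proof. by rewrite /cA !polyCD. Qed.
Lemma liftmxE M i j : liftmx M i j = cA (M i j).
Proof. by rewrite mxE. Qed.

Section G4. Variables c0 c1 : 'F_2.
Local Notation V := (unital_alg c0 c1).

Definition Nc (b : 'I_2) : 'M['F_2]_2 := \matrix_(mu, rho) V mu b rho.
Lemma liftNc b : liftmx (Nc b) = Nmx V b.
Proof. by apply/matrixP => i j; rewrite !mxE. Qed.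

Definition Kc G (mu : 'I_2) : 'M['F_2]_2 := Gam G mu + delta_mx i0 mu.
Definition sgen G (a b : 'I_2) : 'M['F_2]_2 :=
  (Nc b)^T *m Kc G a + Kc G a *m Nc b + \sum_(mu < 2) Nc b a mu *: Kc G mu.
Definition sigc G (M : 'M['F_2]_2) : 'M['F_2]_2 :=
  \sum_(a < 2) \sum_(b < 2) M a b *: sgen G a b.
Definition sigA G (T : 'M[A]_2) : 'M[A]_2 :=
  \sum_(a < 2) \sum_(b < 2) T a b *: liftmx (sgen G a b).

Lemma sigA_lift G M : sigA G (liftmx M) = liftmx (sigc G M).
Proof.
rewrite /sigA /sigc liftmx_sum; apply: eq_bigr => a _.
rewrite liftmx_sum; apply: eq_bigr => b _.
by rewrite liftmxZ mxE.
Qed.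

Lemma add0_of (X Y : zmodType) (f : X -> Y) :
  (forall x y, f (x + y) = f x + f y) -> f 0 = 0.
Proof.
move=> H; have := H 0 0; rewrite addr0 => /(congr1 (fun z => z - f 0)).
by rewrite subrr addrK.
Qed.

Arguments add0_of {X Y f}.
Lemma add_sum2 (X Y : zmodType) (f : X -> Y) (F : 'I_2 -> X) :
  (forall x y, f (x + y) = f x + f y) -> f (\sum_(i < 2) F i) = \sum_(i < 2) f (F i).
Proof. by move=> H; big2; rewrite !H (add0_of H). Qed.
Arguments add_sum2 {X Y f}.

Lemma tens0l eta : tens V 0 eta = 0.
Proof. by apply: (add0_of (f := fun w => tens V w eta)) => x y; rewrite tensDl. Qed.

Lemma tens_sumr w (F : 'I_2 -> 'rV[A]_2) :
  tens V w (\sum_(i < 2) F i) = \sum_(i < 2) tens V w (F i).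
Proof. by apply: (add_sum2 (f := tens V w)) => x y; rewrite tensDr. Qed.

Lemma tens_suml eta (F : 'I_2 -> 'rV[A]_2) :
  tens V (\sum_(i < 2) F i) eta = \sum_(i < 2) tens V (F i) eta.
Proof. by apply: (add_sum2 (f := fun w => tens V w eta)) => x y; rewrite tensDl. Qed.

Lemma tens_dA_dx r mu :
  tens V (dA V r) (dx mu) = tens V theta (r *: dx mu) + r *: delta_mx i0 mu.
Proof. by rewrite dA_eq tensDl tensZr tensZl tens_dx. Qed.

Lemma tens_theta_row w :
  tens V theta w = \sum_(mu < 2) tens V theta (w 0 mu *: dx mu).
Proof. by rewrite {1}(row_dec w) tens_sumr. Qed.

End G4.
Arguments add0_of {X Y f}. Arguments add_sum2 {X Y f}.

Set Implicit Arguments. Unset Strict Implicit.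

Section G5. Variables c0 c1 : 'F_2.
Local Notation V := (unital_alg c0 c1).

Lemma cancel4 (a P Q S : 'M[A]_2) : (a + P) + Q + (a + S) = P + Q + S.
Proof.
apply/matrixP => i j; rewrite !mxE -[RHS]addr0 -(A2 (a i j)); ring.
Qed.

Lemma scal_sum (c : A) (a : 'I_2) (F : 'I_2 -> 'M[A]_2) :
  \sum_(mu < 2) (c%:M : 'M[A]_2) a mu *: F mu = c *: F a.
Proof.
rewrite (bigD1 a) //= mxE eqxx mulr1n big1 ?addr0 // => j /negbTE nj.
by rewrite mxE eq_sym nj mulr0n scale0r.
Qed.

Lemma nabla_inner nabla sigma G : bimod_conn V nabla sigma -> const_coeff nabla G ->
  forall w, nabla w = tens V theta w + \sum_(mu < 2) w 0 mu *: liftmx (Kc G mu).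
Proof.
move=> [Hadd Hl Hr _] Hc w.
rewrite {1}(row_dec w) (add_sum2 _ Hadd) tens_theta_row -big_split; apply: eq_bigr => mu _.
rewrite Hl Hc tens_dA_dx /Kc liftmxD liftmx_delta scalerDr.
exact: addrCA.
Qed.

Lemma lift_sgen G a b : liftmx (sgen c0 c1 G a b) =
  (Nmx V b)^T *m liftmx (Kc G a) + liftmx (Kc G a) *m Nmx V b
  + \sum_(mu < 2) Nmx V b a mu *: liftmx (Kc G mu).
Proof.
rewrite /sgen; move: (Kc G) => K.
rewrite !liftmxD !liftmxM liftmx_tr liftNc liftmx_sum.
by under eq_bigr do rewrite liftmxZ -[cA _](liftmxE (Nc c0 c1 b)) liftNc.
Qed.

Lemma sigma_delta nabla sigma G : bimod_conn V nabla sigma -> const_coeff nabla G ->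
  forall a b, sigma (delta_mx a b) = liftmx (sgen c0 c1 G a b).
Proof.
move=> Hb Hc a b; have [Hadd Hl Hr _] := Hb.
have H := Hr (dx a) (gen b); rewrite dA_gen tens_dx in H.
have -> : sigma (delta_mx a b) =
   nabla (rmul V (dx a) (gen b)) - rtens V (nabla (dx a)) (gen b).
  by rewrite H addrAC subrr add0r.
rewrite (nabla_inner Hb Hc) Hc -rtens_tens tens_dx oppM addrAC -rtensDl.
rewrite rtens_gen.
have -> : delta_mx i0 a + liftmx (Gam G a) = liftmx (Kc G a).
  by rewrite /Kc liftmxD liftmx_delta addrC.
rewrite lift_sgen.
under eq_bigr do rewrite rmul_dx Ract_gen mxE.
rewrite /Rgen [(_ + _)^T]raddfD /= tr_scalar_mx mulmxDl mul_scalar_mx.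
under eq_bigr do rewrite mxE scalerDl.
rewrite big_split /=.
rewrite (scal_sum (gen b) a (fun mu => liftmx (Kc G mu))).
exact: cancel4.
Qed.

Lemma sigma_eq nabla sigma G : bimod_conn V nabla sigma -> const_coeff nabla G ->
  forall T, sigma T = sigA c0 c1 G T.
Proof.
move=> Hb Hc T; have [_ _ _ [Sadd Sl _]] := Hb.
rewrite {1}(matrix_sum_delta T) (add_sum2 _ Sadd); apply: eq_bigr => a _.
rewrite (add_sum2 _ Sadd); apply: eq_bigr => b _.
by rewrite Sl (sigma_delta Hb Hc).
Qed.
End G5.

Lemma wedgeD T U : wedge (T + U) = wedge T + wedge U.
Proof. rewrite /wedge !mxE; ring. Qed.
Lemma wedgeZ (c : A) T : wedge (c *: T) = c * wedge T.
Proof. rewrite /wedge !mxE; ring. Qed.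
Lemma wedge_lift M : wedge (liftmx M) = cA (M i0 i1 + M i1 i0).
Proof. by rewrite /wedge !mxE cA_add. Qed.
Lemma wedge0 : wedge 0 = 0.
Proof. by rewrite /wedge !mxE addr0. Qed.

Definition t3 (mu : 'I_2) (M : 'M['F_2]_2) (b : 'I_2) : 'M['F_2]_2 :=
  \matrix_(p, a) ((p == mu)%:R * M a b).

Section G6. Variables c0 c1 : 'F_2.
Local Notation V := (unital_alg c0 c1).

Definition metc G (g : 'M['F_2]_2) (b : 'I_2) : 'M['F_2]_2 :=
  \sum_(mu < 2) \sum_(nu < 2) g mu nu *:
     ((if b == nu then Gam G mu else 0) + sigc c0 c1 G (t3 mu (Gam G nu) b)).

Lemma tens3l_lift mu M b : tens3l V (dx mu) (liftmx M) b = liftmx (t3 mu M b).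
Proof.
apply/matrixP => p a; rewrite /tens3l mxE rmul_dx liftmxE Ract_cA !mxE.
by rewrite eq_sym; case: (p == mu); rewrite ?mulr1n ?mulr0n ?mul1r ?mul0r /cA ?polyC0.
Qed.

Lemma tens3r_lift M nu b : tens3r (liftmx M) nu b = liftmx (if b == nu then M else 0).
Proof. by rewrite /tens3r; case: (b == nu); rewrite ?liftmx0. Qed.

Lemma metric_lift nabla sigma G (g : 'M['F_2]_2) b :
  const_coeff nabla G -> (forall T, sigma T = sigA c0 c1 G T) ->
  \sum_(mu < 2) \sum_(nu < 2)
       (cA (g mu nu) *: (tens3r (nabla (dx mu)) nu b
                         + sigma (tens3l V (dx mu) (nabla (dx nu)) b)))
  = liftmx (metc G g b).
Proof.
move=> Hc Hs; rewrite /metc liftmx_sum; apply: eq_bigr => mu _.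
rewrite liftmx_sum; apply: eq_bigr => nu _.
by rewrite !Hc Hs tens3l_lift tens3r_lift sigA_lift liftmxZ liftmxD.
Qed.

Lemma metric_iff nabla sigma G (g : 'M['F_2]_2) :
  const_coeff nabla G -> (forall T, sigma T = sigA c0 c1 G T) ->
  metric_compatible V g nabla sigma <-> (forall b, metc G g b = 0).
Proof.
move=> Hc Hs; split => H b; have := H b; rewrite (metric_lift _ _ Hc Hs).
  by rewrite -liftmx0 => /liftmx_inj.
by move=> ->; rewrite liftmx0.
Qed.

Lemma F2_eq_add (x y : 'F_2) : x + y = 0 -> x = y.
Proof. by case: (F2P x) => ->; case: (F2P y) => -> //; move/eqP. Qed.

Lemma tors_sym nabla sigma G : bimod_conn V nabla sigma -> const_coeff nabla G ->
  torsion_free V nabla -> forall mu, Gam G mu i0 i1 = Gam G mu i1 i0.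
Proof.
move=> Hb Hc Ht mu; have := Ht (dx mu); rewrite Hc wedge_lift /dd.
under eq_bigr do rewrite mxE -cA_nat dA_cA tens0l wedge0.
have cA0 : cA 0 = 0 by rewrite /cA !polyC0.
rewrite big1 // -cA0 => /cA_inj; exact: F2_eq_add.
Qed.

End G6.

Lemma cancel3 (P Q R : 'M[A]_2) : (P + Q) + (R + P) = R + Q.
Proof. apply/matrixP => i j; rewrite !mxE -[RHS]addr0 -(A2 (P i j)); ring. Qed.
Lemma cancel5 (X P S : 'M[A]_2) : (X + P) + (P + S) = X + S.
Proof. apply/matrixP => i j; rewrite !mxE -[RHS]addr0 -(A2 (P i j)); ring. Qed.

Lemma lin_dec (f : 'M[A]_2 -> 'M[A]_2) :
  (forall T U, f (T + U) = f T + f U) -> (forall (c : A) T, f (c *: T) = c *: f T) ->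
  forall T, f T = \sum_(a < 2) \sum_(b < 2) T a b *: f (delta_mx a b).
Proof.
move=> Hadd Hz T; rewrite {1}(matrix_sum_delta T) (add_sum2 _ Hadd).
apply: eq_bigr => a _; rewrite (add_sum2 _ Hadd); apply: eq_bigr => b _.
by rewrite Hz.
Qed.

Lemma M2F m n (M : 'M['F_2]_(m, n)) : M + M = 0.
Proof. by apply/matrixP => i j; rewrite !mxE F2_2. Qed.

Lemma scal_sumF (a : 'I_2) (F : 'I_2 -> 'M['F_2]_2) :
  \sum_(mu < 2) (1%:M : 'M['F_2]_2) a mu *: F mu = F a.
Proof.
rewrite (bigD1 a) //= mxE eqxx mulr1n scale1r big1 ?addr0 // => j /negbTE nj.
by rewrite mxE eq_sym nj mulr0n scale0r.
Qed.

Section G7. Variables c0 c1 : 'F_2.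
Local Notation V := (unital_alg c0 c1).
Local Notation sigA := (sigA c0 c1).
Local Notation sgen := (sgen c0 c1).
Local Notation sigc := (sigc c0 c1).
Local Notation Nc := (Nc c0 c1).

Lemma sigAD G T U : sigA G (T + U) = sigA G T + sigA G U.
Proof.
rewrite /Submission.sigA -big_split; apply: eq_bigr => a _.
rewrite -big_split; apply: eq_bigr => b _; by rewrite mxE scalerDl.
Qed.

Lemma sigAZ G (c : A) T : sigA G (c *: T) = c *: sigA G T.
Proof.
rewrite /Submission.sigA scaler_sumr; apply: eq_bigr => a _.
rewrite scaler_sumr; apply: eq_bigr => b _; by rewrite mxE scalerA.
Qed.

Lemma sigA_delta G a b : sigA G (delta_mx a b) = liftmx (sgen G a b).
Proof.
rewrite -liftmx_delta sigA_lift; congr liftmx.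
rewrite /Submission.sigc (bigD1 a) //= (bigD1 b) //= mxE !eqxx mulr1n scale1r.
rewrite big1 ?addr0; last by move=> j /negbTE nj; rewrite mxE nj andbF mulr0n scale0r.
rewrite big1 ?addr0 // => i /negbTE ni; rewrite big1 // => j _.
by rewrite mxE ni mulr0n scale0r.
Qed.

Lemma Nc0 : Nc i0 = 1%:M.
Proof.
apply/matrixP => mu rho; rewrite !mxE /unital_alg.
by case: (I2P mu) => ->; case: (I2P rho) => -> /=.
Qed.

Lemma sgen0 G mu : sgen G mu i0 = Kc G mu.
Proof.
rewrite /Submission.sgen Nc0 trmx1 mul1mx mulmx1 M2F add0r.
exact: scal_sumF.
Qed.

Definition Lm (T : 'M[A]_2) := (Nmx V i1)^T *m T + T *m Nmx V i1.

Lemma rtens_genE T rho :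
  rtens V T (gen rho) = gen rho *: T + ((Nmx V rho)^T *m T + T *m Nmx V rho).
Proof.
rewrite rtens_gen /Rgen [(_ + _)^T]raddfD /= tr_scalar_mx mulmxDl mul_scalar_mx.
by rewrite addrA.
Qed.

Lemma rtens_gen0 T : rtens V T (gen i0) = gen i0 *: T.
Proof. by rewrite rtens_genE Nmx0 trmx1 mul1mx mulmx1 M2 addr0. Qed.

Definition Hcom G := forall a b,
  sigc G ((Nc i1)^T *m delta_mx a b + delta_mx a b *m Nc i1)
  = (Nc i1)^T *m sgen G a b + sgen G a b *m Nc i1.

Lemma sig_Lm G : Hcom G -> forall T, sigA G (Lm T) = Lm (sigA G T).
Proof.
move=> Hc T.
have LD : forall T U, Lm (T + U) = Lm T + Lm U.
  by move=> X Y; rewrite /Lm mulmxDr mulmxDl addrACA.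
have LZ : forall (c : A) T, Lm (c *: T) = c *: Lm T.
  by move=> c X; rewrite /Lm -scalemxAr -scalemxAl scalerDr.
rewrite (lin_dec (f := fun T => sigA G (Lm T))); first last.
- by move=> c X; rewrite LZ sigAZ.
- by move=> X Y; rewrite LD sigAD.
rewrite (lin_dec (f := fun T => Lm (sigA G T)) _ _ T); first last.
- by move=> c X; rewrite sigAZ LZ.
- by move=> X Y; rewrite sigAD LD.
apply: eq_bigr => a _; apply: eq_bigr => b _; congr (_ *: _).
rewrite sigA_delta /Lm -liftNc -liftmx_delta -liftmx_tr -!liftmxM -liftmxD sigA_lift Hc.
by rewrite liftmxD !liftmxM liftmx_tr.
Qed.

Lemma sig_rgen G : Hcom G -> forall T rho,
  sigA G (rtens V T (gen rho)) = rtens V (sigA G T) (gen rho).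
Proof.
move=> Hc T rho; case: (I2P rho) => ->.
  by rewrite !rtens_gen0 sigAZ.
by rewrite !rtens_genE sigAD sigAZ -/(Lm T) sig_Lm.
Qed.

Lemma rtens_cA T c : rtens V T (cA c) = cA c *: T.
Proof.
rewrite /rtens {2}(matrix_sum_delta T) scaler_sumr; apply: eq_bigr => mu _.
rewrite scaler_sumr; apply: eq_bigr => nu _.
rewrite {1}/rmul Ract_cA mul_mx_scalar tensZr /rmul Ract_cA mul_mx_scalar tensZl.
by rewrite tens_dx scalerA mulrC -scalerA.
Qed.

Lemma rtens_sum2 (F : 'I_2 -> 'M[A]_2) a :
  rtens V (\sum_(i < 2) F i) a = \sum_(i < 2) rtens V (F i) a.
Proof. by apply: (add_sum2 (f := fun T => rtens V T a)) => X Y; rewrite rtensDl. Qed.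

Lemma rtens_mul T a b : rtens V T (a * b) = rtens V (rtens V T a) b.
Proof.
rewrite (matrix_sum_delta T) !rtens_sum2; apply: eq_bigr => mu _.
rewrite !rtens_sum2; apply: eq_bigr => nu _.
rewrite !rtensZ -(tens_dx c0 c1) !rtens_tens /rmul Ract_mul -mulmxE mulmxA.
by rewrite -matrix_sum_delta.
Qed.

Lemma sig_rtens G : Hcom G -> forall a T, sigA G (rtens V T a) = rtens V (sigA G T) a.
Proof.
move=> Hc.
have Pc : forall c T, sigA G (rtens V T (cA c)) = rtens V (sigA G T) (cA c).
  by move=> c T; rewrite !rtens_cA sigAZ.
have Padd : forall a b, (forall T, sigA G (rtens V T a) = rtens V (sigA G T) a) ->
   (forall T, sigA G (rtens V T b) = rtens V (sigA G T) b) ->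
   forall T, sigA G (rtens V T (a + b)) = rtens V (sigA G T) (a + b).
  by move=> a b Ha Hb T; rewrite !rtensDr sigAD Ha Hb.
have Pmul : forall a b, (forall T, sigA G (rtens V T a) = rtens V (sigA G T) a) ->
   (forall T, sigA G (rtens V T b) = rtens V (sigA G T) b) ->
   forall T, sigA G (rtens V T (a * b)) = rtens V (sigA G T) (a * b).
  by move=> a b Ha Hb T; rewrite !rtens_mul Hb Ha.
have Pe : forall T, sigA G (rtens V T evar) = rtens V (sigA G T) evar.
  by move=> T; exact: (sig_rgen Hc T i0).
have Px : forall T, sigA G (rtens V T xvar) = rtens V (sigA G T) xvar.
  by move=> T; exact: (sig_rgen Hc T i1).
elim/poly_ind => [|p c IH].
  by move=> T; have := Pc 0 T; rewrite /cA !polyC0.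
apply: (Padd).
  by apply: (Pmul); [exact: IH | exact: Px].
elim/poly_ind: c => [|q k IH2].
  by move=> T; have := Pc 0 T; rewrite /cA !polyC0.

rewrite polyCD polyCM; apply: (Padd); last exact: Pc.
by apply: (Pmul); [exact: IH2 | exact: Pe].
Qed.

Definition Hinv G := forall a b, sigc G (sgen G a b) = delta_mx a b.

Lemma sig_inv G : Hinv G -> forall T, sigA G (sigA G T) = T.
Proof.
move=> Hi T.
rewrite (lin_dec (f := fun T => sigA G (sigA G T))); first last.
- by move=> c X; rewrite !sigAZ.
- by move=> X Y; rewrite !sigAD.
rewrite {2}(matrix_sum_delta T); apply: eq_bigr => a _; apply: eq_bigr => b _.
by rewrite sigA_delta sigA_lift Hi liftmx_delta.
Qed.

Definition nablaA G (w : 'rV[A]_2) := tens V theta w + sigA G (tens V w theta).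

Lemma nablaA_bimod G : Hcom G -> bimod_conn V (nablaA G) (sigA G).
Proof.
move=> Hc; split.
- by move=> w e; rewrite /nablaA tensDr tensDl sigAD addrACA.
- move=> a w; rewrite /nablaA tensZr tensZl sigAZ dA_eq tensDl tensZl scalerDr.
  by rewrite cancel3.
- move=> w a; rewrite /nablaA rtensDl rtens_tens -sig_rtens // rtens_tens dA_eq tensDr.
  by rewrite sigAD tensZr cancel5.
- split; [exact: sigAD | exact: sigAZ | by move=> T a; rewrite sig_rtens].
Qed.

Lemma nablaA_const G : const_coeff (nablaA G) G.
Proof.
move=> mu; rewrite /nablaA /theta !tens_dx sigA_delta sgen0 /Kc liftmxD liftmx_delta.
by rewrite addrCA M2 addr0.
Qed.

Lemma nablaA_tors G : Hcom G -> (forall mu, Gam G mu i0 i1 = Gam G mu i1 i0) ->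
  torsion_free V (nablaA G).
Proof.
move=> Hc Hs w.
rewrite (nabla_inner (nablaA_bimod Hc) (@nablaA_const G)) /dd wedgeD tens_theta_row.
rewrite !(add_sum2 _ wedgeD) -big_split; apply: eq_bigr => mu _.
rewrite tens_dA_dx !wedgeD wedgeZ /Kc liftmxD wedgeD wedge_lift Hs F2_2.
have cA0 : cA 0 = 0 by rewrite /cA !polyC0.
by rewrite cA0 add0r liftmx_delta wedgeZ.
Qed.

Lemma QLC_exists G (g : 'M['F_2]_2) : Hcom G -> Hinv G ->
  (forall mu, Gam G mu i0 i1 = Gam G mu i1 i0) -> (forall b, metc c0 c1 G g b = 0) ->
  exists nabla sigma, is_QLC V g nabla sigma /\ const_coeff nabla G.
Proof.
move=> Hc Hi Hs Hm; exists (nablaA G), (sigA G); split; last exact: nablaA_const.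
split; [exact: nablaA_bimod | | exact: nablaA_tors |].
  by exists (sigA G); move=> T; exact: sig_inv.
exact: (proj2 (metric_iff g (@nablaA_const G) (fun T => erefl)) Hm).
Qed.

End G7.

Definition f4 := ('F_2 * 'F_2 * 'F_2 * 'F_2)%type.
Definition toM (x : f4) : 'M['F_2]_2 := let: (a, b, c, d) := x in mx2 a b c d.
Definition ib (i : bool) : 'I_2 := if i then i1 else i0.
Definition ent (x : f4) (i j : bool) : 'F_2 :=
  let: (a, b, c, d) := x in
  if i then (if j then d else c) else (if j then b else a).
Definition add4 (x y : f4) : f4 :=
  let: (a, b, c, d) := x in let: (a', b', c', d') := y in
  (a + a', b + b', c + c', d + d').
Definition mul4 (x y : f4) : f4 :=
  let: (a, b, c, d) := x in let: (e, f, g, h) := y in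
  (a * e + b * g, a * f + b * h, c * e + d * g, c * f + d * h).
Definition tr4 (x : f4) : f4 := let: (a, b, c, d) := x in (a, c, b, d).
Definition sc4 (s : 'F_2) (x : f4) : f4 :=
  let: (a, b, c, d) := x in (s * a, s * b, s * c, s * d).
Definition zero4 : f4 := (0, 0, 0, 0).
Definition del4 (i j : bool) : f4 :=
  (if ~~ i && ~~ j then 1 else 0, if ~~ i && j then 1 else 0,
   if i && ~~ j then 1 else 0, if i && j then 1 else 0).

Lemma I2b (i : 'I_2) : i = ib false \/ i = ib true.
Proof. by case: (I2P i) => ->; [left|right]. Qed.

Lemma toM_ent x i j : toM x (ib i) (ib j) = ent x i j.
Proof. by case: x => [[[a b] c] d]; case: i; case: j; rewrite /toM mxE. Qed.

Lemma toM_ext (M : 'M['F_2]_2) :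
  M = toM (M (ib false) (ib false), M (ib false) (ib true), M (ib true) (ib false), M (ib true) (ib true)).
Proof.
apply/matrixP => i j; case: (I2b i) => ->; case: (I2b j) => ->; by rewrite toM_ent.
Qed.

Lemma toM_eqP (M : 'M['F_2]_2) x :
  (forall i j, M (ib i) (ib j) = ent x i j) -> M = toM x.
Proof.
move=> H; apply/matrixP => i j; case: (I2b i) => ->; case: (I2b j) => ->;
  by rewrite toM_ent H.
Qed.

Lemma toM_inj x y : toM x = toM y -> x = y.
Proof.
case: x => [[[a b] c] d]; case: y => [[[a' b'] c'] d'] H.
have E : forall i j, toM (a, b, c, d) (ib i) (ib j) = toM (a', b', c', d') (ib i) (ib j).
  by move=> i j; rewrite H.
have := E false false; have := E false true; have := E true false; have := E true true.
by rewrite !toM_ent /= => -> -> -> ->.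
Qed.

Lemma toM0 : toM zero4 = 0.
Proof. by apply/esym/toM_eqP => i j; rewrite mxE; case: i; case: j. Qed.

Ltac entsimp := rewrite ?mxE ?big_ord_recl ?big_ord0 /=.

Lemma sum2 (X : nmodType) (F : 'I_2 -> X) : \sum_(i < 2) F i = F (ib false) + F (ib true).
Proof. by rewrite !big_ord_recl big_ord0 addr0 lift00. Qed.

Lemma toM_add x y : toM (add4 x y) = toM x + toM y.
Proof.
apply/esym/toM_eqP => i j; rewrite mxE !toM_ent.
by case: x => [[[a b] c] d]; case: y => [[[a' b'] c'] d']; case: i; case: j.
Qed.

Lemma toM_mul x y : toM (mul4 x y) = toM x *m toM y.
Proof.
apply/esym/toM_eqP => i j; rewrite mxE sum2 !toM_ent.
by case: x => [[[a b] c] d]; case: y => [[[a' b'] c'] d']; case: i; case: j.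
Qed.

Lemma toM_tr x : toM (tr4 x) = (toM x)^T.
Proof.
apply/esym/toM_eqP => i j; rewrite mxE !toM_ent.
by case: x => [[[a b] c] d]; case: i; case: j.
Qed.

Lemma toM_sc s x : toM (sc4 s x) = s *: toM x.
Proof.
apply/esym/toM_eqP => i j; rewrite mxE !toM_ent.
by case: x => [[[a b] c] d]; case: i; case: j.
Qed.

Lemma toM_del i j : toM (del4 i j) = delta_mx (ib i) (ib j).
Proof.
apply/esym/toM_eqP => k l; rewrite mxE.
by case: i; case: j; case: k; case: l.
Qed.

Lemma toM_L4 a b c d X Y Z W :
  toM (add4 (add4 (sc4 a X) (sc4 b Y)) (add4 (sc4 c Z) (sc4 d W))) =
  a *: toM X + b *: toM Y + (c *: toM Z + d *: toM W).
Proof. by rewrite !toM_add !toM_sc. Qed.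

Section R. Variables c0 c1 : 'F_2.
Local Notation V := (unital_alg c0 c1).

Definition Nc4 (b : bool) : f4 := if b then (0, 1, c0, c1) else (1, 0, 0, 1).

Lemma Nc_refl b : Nc c0 c1 (ib b) = toM (Nc4 b).
Proof.
apply: toM_eqP => i j; rewrite mxE /unital_alg.
by case: b; case: i; case: j => /=.
Qed.

Definition Gam4 (x y : f4) (mu : bool) := if mu then y else x.
Lemma Gam_refl x y mu : Gam (toM x, toM y) (ib mu) = toM (Gam4 x y mu).
Proof. by case: mu. Qed.

Definition Kc4 x y mu := add4 (Gam4 x y mu) (del4 false mu).
Lemma Kc_refl x y mu : Kc (toM x, toM y) (ib mu) = toM (Kc4 x y mu).
Proof. by rewrite /Kc Gam_refl /Kc4 toM_add toM_del. Qed.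

Definition sgen4 x y (a b : bool) : f4 :=
  let N := Nc4 b in
  add4 (add4 (mul4 (tr4 N) (Kc4 x y a)) (mul4 (Kc4 x y a) N))
       (add4 (sc4 (ent N a false) (Kc4 x y false)) (sc4 (ent N a true) (Kc4 x y true))).

Lemma sgen_refl x y a b : sgen c0 c1 (toM x, toM y) (ib a) (ib b) = toM (sgen4 x y a b).
Proof.
rewrite /sgen4 /sgen sum2 !Kc_refl !Nc_refl !toM_ent.
by rewrite !toM_add !toM_mul !toM_tr !toM_sc /Kc4 !toM_add.
Qed.

Definition sigc4 x y (M : f4) : f4 :=
  add4 (add4 (sc4 (ent M false false) (sgen4 x y false false))
             (sc4 (ent M false true) (sgen4 x y false true)))
       (add4 (sc4 (ent M true false) (sgen4 x y true false))
             (sc4 (ent M true true) (sgen4 x y true true))).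

Lemma sigc_refl x y M : sigc c0 c1 (toM x, toM y) (toM M) = toM (sigc4 x y M).
Proof.
rewrite /sigc4 /sigc !sum2 !toM_ent !sgen_refl.
by rewrite toM_L4 addrA.
Qed.

Definition t34 (mu : bool) (M : f4) (b : bool) : f4 :=
  (if mu then 0 else ent M false b, if mu then 0 else ent M true b,
   if mu then ent M false b else 0, if mu then ent M true b else 0).

Lemma t3_refl mu M b : t3 (ib mu) (toM M) (ib b) = toM (t34 mu M b).
Proof.
apply: toM_eqP => i j; rewrite mxE toM_ent.
by case: mu; case: i; case: j; rewrite /= ?mul1r ?mul0r.
Qed.

Definition metc4 x y (g : f4) (b : bool) : f4 :=
  let T mu nu := sc4 (ent g mu nu)
      (add4 (if b == nu then Gam4 x y mu else zero4) (sigc4 x y (t34 mu (Gam4 x y nu) b))) in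
  add4 (add4 (T false false) (T false true)) (add4 (T true false) (T true true)).

Lemma metc_refl x y g b : metc c0 c1 (toM x, toM y) (toM g) (ib b) = toM (metc4 x y g b).
Proof.
rewrite /metc4 /metc !sum2 !toM_ent !Gam_refl !t3_refl !sigc_refl.
have E : forall mu nu : bool, (if ib b == ib nu then toM (Gam4 x y mu) else 0)
    = toM (if b == nu then Gam4 x y mu else zero4).
  by move=> mu nu; case: b; case: nu; rewrite ?toM0.
by rewrite !E toM_L4 ![toM (add4 (if _ then _ else _) _)]toM_add addrA.
Qed.
End R.

Lemma det4 (a b c d : 'F_2) : \det (toM (a, b, c, d)) = a * d - b * c.
Proof.
rewrite (expand_det_row _ (ib false)) sum2 /cofactor !det_mx11 !mxE /=.
rewrite !expr0 !expr1 !mul1r !mulN1r; ring.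
Qed.

Section S. Variables c0 c1 : 'F_2.
Local Notation V := (unital_alg c0 c1).

Definition sym4 (x y : f4) :=
  (ent x false true == ent x true false) && (ent y false true == ent y true false).
Definition met4 x y gm :=
  (metc4 c0 c1 x y gm false == zero4) && (metc4 c0 c1 x y gm true == zero4).
Definition com1 x y a b :=
  let N := Nc4 c0 c1 true in
  sigc4 c0 c1 x y (add4 (mul4 (tr4 N) (del4 a b)) (mul4 (del4 a b) N))
  == add4 (mul4 (tr4 N) (sgen4 c0 c1 x y a b)) (mul4 (sgen4 c0 c1 x y a b) N).
Definition com4 x y := [&& com1 x y false false, com1 x y false true,
                          com1 x y true false & com1 x y true true].
Definition inv1 x y a b := sigc4 c0 c1 x y (sgen4 c0 c1 x y a b) == del4 a b.
Definition inv4 x y := [&& inv1 x y false false, inv1 x y false true,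
                          inv1 x y true false & inv1 x y true true].
Definition flip4 := [&& sgen4 c0 c1 zero4 zero4 false false == del4 false false,
                        sgen4 c0 c1 zero4 zero4 false true == del4 true false,
                        sgen4 c0 c1 zero4 zero4 true false == del4 false true &
                        sgen4 c0 c1 zero4 zero4 true true == del4 true true].

Lemma i0b : i0 = ib false. Proof. by []. Qed.
Lemma i1b : i1 = ib true. Proof. by []. Qed.

Lemma QLC_nec4 (gm x y : f4) nabla sigma :
  is_QLC V (toM gm) nabla sigma -> const_coeff nabla (toM x, toM y) ->
  sym4 x y && met4 x y gm.
Proof.
move=> [Hb _ Ht Hm] Hc; apply/andP; split.
  rewrite /sym4; have Hs := tors_sym Hb Hc Ht.
  have := Hs (ib false); have := Hs (ib true).
  by rewrite !Gam_refl /= !i0b !i1b !toM_ent => -> ->; rewrite !eqxx.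
have := proj1 (metric_iff (toM gm) Hc (sigma_eq Hb Hc)) Hm.
move=> H; have := H (ib false); have := H (ib true).
rewrite /met4 !metc_refl -toM0 => /toM_inj -> /toM_inj ->.
by rewrite !eqxx.
Qed.

Lemma QLC_suff4 (gm x y : f4) :
  [&& com4 x y, inv4 x y, sym4 x y & met4 x y gm] ->
  exists nabla sigma, is_QLC V (toM gm) nabla sigma /\ const_coeff nabla (toM x, toM y).
Proof.
case/and4P => Hc Hi Hs Hm; apply: QLC_exists.
- move=> a b; case: (I2b a) => ->; case: (I2b b) => ->;
  rewrite i1b !Nc_refl !sgen_refl -!toM_del -!toM_tr -!toM_mul -!toM_add sigc_refl;
  congr toM; apply/eqP; by case/and4P: Hc.
- move=> a b; case: (I2b a) => ->; case: (I2b b) => ->;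
  rewrite !sgen_refl sigc_refl -toM_del; congr toM; apply/eqP; by case/and4P: Hi.
- case/andP: Hs => /eqP H1 /eqP H2 mu; rewrite i0b i1b.
  by case: (I2b mu) => ->; rewrite Gam_refl !toM_ent.
- case/andP: Hm => /eqP H1 /eqP H2 b; case: (I2b b) => ->;
  by rewrite metc_refl ?H1 ?H2 toM0.
Qed.

End S.

Section T. Variables c0 c1 : 'F_2.
Local Notation V := (unital_alg c0 c1).

Lemma alpha0 (g : 'M['F_2]_2) G nabla sigma : is_QLC V g nabla sigma -> const_coeff nabla G ->
  forall w, nabla w - (tens V theta w - sigma (tens V w theta)) = 0.
Proof.
move=> [Hb _ _ _] Hc w.
have Hs := sigma_eq Hb Hc.
have E : sigma (tens V w theta) = \sum_(mu < 2) w 0 mu *: liftmx (Kc G mu).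
  rewrite Hs {1}(row_dec w) tens_suml (add_sum2 _ (@sigAD c0 c1 G)).
  apply: eq_bigr => mu _.
  by rewrite tensZl sigAZ /theta tens_dx sigA_delta sgen0.
by rewrite (nabla_inner Hb Hc) E !oppM M2.
Qed.

Lemma flip_ok (g : 'M['F_2]_2) nabla sigma : flip4 c0 c1 -> is_QLC V g nabla sigma ->
  const_coeff nabla (0, 0) ->
  forall mu nu, sigma (tens V (dx mu) (dx nu)) = tens V (dx nu) (dx mu).
Proof.
move=> Hf [Hb _ _ _] Hc mu nu; rewrite !tens_dx (sigma_delta Hb Hc) -toM0.
case/and4P: Hf => /eqP H1 /eqP H2 /eqP H3 /eqP H4.
by case: (I2b mu) => ->; case: (I2b nu) => ->;
  rewrite sgen_refl ?H1 ?H2 ?H3 ?H4 toM_del liftmx_delta.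
Qed.

Lemma qlc_class4 (gm : f4) (L4 : seq (f4 * f4)) :
  (forall a b d e f h : 'F_2,
     met4 c0 c1 (a, b, b, d) (e, f, f, h) gm ==> (((a, b, b, d), (e, f, f, h)) \in L4)) ->
  all (fun p => [&& com4 c0 c1 p.1 p.2, inv4 c0 c1 p.1 p.2, sym4 p.1 p.2 &
                    met4 c0 c1 p.1 p.2 gm]) L4 ->
  flip4 c0 c1 ->
  qlc_classification V (toM gm) [seq (toM p.1, toM p.2) | p <- L4].
Proof.
move=> Hcomp Hall Hflip; split.
- move=> [G1 G2].
  have [x ->] : exists x, G1 = toM x := ex_intro _ _ (toM_ext G1).
  have [y ->] : exists y, G2 = toM y := ex_intro _ _ (toM_ext G2).
  case: x => [[[a b] c] d]; case: y => [[[e f] g] h].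
  split.
    case=> nabla [sigma [HQ Hc]].
    have := QLC_nec4 HQ Hc.
    case/andP => /andP [/eqP /= Hb /eqP /= Hf] Hm.
    rewrite -Hb -Hf in Hm *.
    have := Hcomp a b d e f h; rewrite Hm /= => Hin.
    by apply/mapP; exists ((a, b, b, d), (e, f, f, h)).
  case/mapP => [[x' y'] Hin [E1 E2]].
  have E1' := @toM_inj (a, b, c, d) x' E1; have E2' := @toM_inj (e, f, g, h) y' E2.
  subst x' y'.
  apply: QLC_suff4.
  exact: (allP Hall _ Hin).
- by move=> G nabla sigma HQ Hc w; exact: (alpha0 HQ Hc).
- by move=> nabla sigma HQ Hc; exact: (flip_ok Hflip HQ Hc).
Qed.

Definition qm4 (gm : f4) :=
  let N := Nc4 c0 c1 true in
  [&& tr4 gm == gm,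
      (let: (a, b, c, d) := gm in a * d - b * c) != 0 &
      add4 (mul4 (tr4 N) gm) (mul4 gm N) == zero4].

Lemma central_iff T rho :
  (gen rho *: T = rtens V T (gen rho)) <-> ((Nmx V rho)^T *m T + T *m Nmx V rho = 0).
Proof.
rewrite rtens_genE; split => [H | ->]; last by rewrite addr0.
by have := congr1 (fun z => - (gen rho *: T) + z) H; rewrite addNr addKr.
Qed.

Lemma qmetric4 (gm : f4) : is_qmetric V (toM gm) <-> qm4 gm.
Proof.
have E : liftmx (toM (add4 (mul4 (tr4 (Nc4 c0 c1 true)) gm) (mul4 gm (Nc4 c0 c1 true))))
   = (Nmx V i1)^T *m liftmx (toM gm) + liftmx (toM gm) *m Nmx V i1.
  by rewrite toM_add !toM_mul toM_tr -Nc_refl -i1b liftmxD !liftmxM liftmx_tr liftNc.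
case: gm E => [[[a b] c] d] E.
split.
- case=> Htr Hu Hc; apply/and3P; split.
  + by apply/eqP/toM_inj; rewrite toM_tr.
  + by move: Hu; rewrite unitmxE unitfE det4.
  + apply/eqP/toM_inj; apply: liftmx_inj; rewrite E toM0 liftmx0.
    exact/(central_iff _ i1).
- case/and3P => /eqP Htr Hu /eqP Hc; split.
  + by rewrite -toM_tr Htr.
  + by rewrite unitmxE unitfE det4.
  + move=> rho; apply/central_iff; case: (I2P rho) => ->.
      by rewrite Nmx0 trmx1 mul1mx mulmx1 M2.
    by rewrite -E Hc toM0 liftmx0.
Qed.

Lemma qmetric_class (L4 : seq f4) :
  (forall a b c d : 'F_2, qm4 (a, b, c, d) = ((a, b, c, d) \in L4)) ->
  forall g, is_qmetric V g <-> g \in [seq toM x | x <- L4].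
Proof.
move=> H g; have [x ->] : exists x, g = toM x := ex_intro _ _ (toM_ext g).
rewrite qmetric4 (mem_map toM_inj); case: x => [[[a b] c] d].
by rewrite H.
Qed.
End T.

Ltac f2split := repeat match goal with |- forall (_ : 'F_2), _ =>
  let z := fresh "z" in move=> z; case: (F2P z) => -> end.
Ltac fin := f2split; vm_compute; reflexivity.

Theorem mainTheorem4 :
  (* quantum metrics *)
  (forall g, is_qmetric VA g <-> g \in [:: mx2 0 1 1 0; mx2 0 1 1 1]) /\
  (forall g, is_qmetric VB g <-> g \in [:: mx2 1 1 1 0]) /\
  (forall g, is_qmetric VC g <-> g \in [:: mx2 0 1 1 1; mx2 1 1 1 0; mx2 1 0 0 1]) /\
  (* QLCs with constant coefficients *)
  qlc_classification VA (mx2 0 1 1 0)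
    [:: (0, 0);
        (mx2 0 0 0 1, 0);
        (mx2 0 1 1 0, mx2 0 0 0 1);
        (mx2 0 1 1 1, mx2 0 0 0 1);
        (0, mx2 1 0 0 0);
        (mx2 0 1 1 0, mx2 1 0 0 1)] /\
  qlc_classification VA (mx2 0 1 1 1)
    [:: (0, 0);
        (mx2 0 0 0 1, 0);
        (mx2 0 1 1 0, mx2 0 0 0 1);
        (mx2 0 1 1 1, mx2 0 0 0 1)] /\
  qlc_classification VB (mx2 1 1 1 0)
    [:: (0, 0); (0, mx2 1 0 0 0)] /\
  qlc_classification VC (mx2 0 1 1 1)
    [:: (0, 0); (mx2 0 1 1 1, mx2 0 0 0 1)] /\
  qlc_classification VC (mx2 1 1 1 0)
    [:: (0, 0); (0, mx2 1 0 0 0)] /\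
  qlc_classification VC (mx2 1 0 0 1)
    [:: (0, 0); (mx2 1 0 0 1, mx2 0 1 1 0)].
Proof.
split.
  by apply: (qmetric_class (L4 := [:: (0, 1, 1, 0); (0, 1, 1, 1)])); fin.
split.
  by apply: (qmetric_class (L4 := [:: (1, 1, 1, 0)])); fin.
split.
  by apply: (qmetric_class (L4 := [:: (0, 1, 1, 1); (1, 1, 1, 0); (1, 0, 0, 1)])); fin.
rewrite -!toM0.
split.
  by apply: (qlc_class4 (gm := (0,1,1,0)) (L4 := [:: (zero4, zero4); ((0,0,0,1), zero4);
     ((0,1,1,0), (0,0,0,1)); ((0,1,1,1), (0,0,0,1)); (zero4, (1,0,0,0));
     ((0,1,1,0), (1,0,0,1))])); fin.
split.
  by apply: (qlc_class4 (gm := (0,1,1,1)) (L4 := [:: (zero4, zero4); ((0,0,0,1), zero4);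
     ((0,1,1,0), (0,0,0,1)); ((0,1,1,1), (0,0,0,1))])); fin.
split.
  by apply: (qlc_class4 (gm := (1,1,1,0)) (L4 := [:: (zero4, zero4); (zero4, (1,0,0,0))])); fin.
split.
  by apply: (qlc_class4 (gm := (0,1,1,1)) (L4 := [:: (zero4, zero4); ((0,1,1,1), (0,0,0,1))])); fin.
split.
  by apply: (qlc_class4 (gm := (1,1,1,0)) (L4 := [:: (zero4, zero4); (zero4, (1,0,0,0))])); fin.
by apply: (qlc_class4 (gm := (1,0,0,1)) (L4 := [:: (zero4, zero4); ((1,0,0,1), (0,1,1,0))])); fin.
Qed.
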